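(* Let $\mathbf{L}\in\{\mathbf{K}_D,\mathbf{KD}_D,\mathbf{KT}_D\}$. The weakening rules are admissible in $\mathsf{G}(\mathbf{L})$: for all finite multisets $\Gamma,\Delta$ and every formula $\lambda$, if $\mathsf{G}(\mathbf{L})\vdash\Gamma\Rightarrow\Delta$ then $\mathsf{G}(\mathbf{L})\vdash\Gamma\Rightarrow\Delta,\lambda$ and $\mathsf{G}(\mathbf{L})\vdash\lambda,\Gamma\Rightarrow\Delta$.
   Context: Language: fix a finite nonempty set $\mathsf{Agt}$ of agents and a countable set $\mathsf{Prop}$ of propositional variables; $\mathsf{Grp}$ is the set of nonempty subsets of $\mathsf{Agt}$. Formulas: $\alpha::=p\mid\bot\mid\alpha\wedge\alpha\mid\alpha\vee\alpha\mid\alpha\rightarrow\alpha\mid\neg\alpha\mid D_G\alpha$ ($p\in\mathsf{Prop}$, $G\in\mathsf{Grp}$). Outmost-boxed formula: one of the form $D_G\gamma$. Sequent calculi (sequents $\Gamma\Rightarrow\Delta$ are pairs of finite multisets; derivable = root of a finite tree built from initial sequents by rules): $\mathsf{G}(\mathbf{K}_D)$ has initial sequents $\Gamma,p\Rightarrow p,\Delta$ and $\bot,\Gamma\Rightarrow\Delta$; rules $(R\wedge)$ from $\Gamma\Rightarrow\Delta,\alpha_1$ and $\Gamma\Rightarrow\Delta,\alpha_2$ infer $\Gamma\Rightarrow\Delta,\alpha_1\wedge\alpha_2$; $(L\wedge)$ from $\alpha_1,\alpha_2,\Gamma\Rightarrow\Delta$ infer $\alpha_1\wedge\alpha_2,\Gamma\Rightarrow\Delta$;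 $(R\vee)$ from $\Gamma\Rightarrow\Delta,\alpha_1,\alpha_2$ infer $\Gamma\Rightarrow\Delta,\alpha_1\vee\alpha_2$; $(L\vee)$ from $\alpha_1,\Gamma\Rightarrow\Delta$ and $\alpha_2,\Gamma\Rightarrow\Delta$ infer $\alpha_1\vee\alpha_2,\Gamma\Rightarrow\Delta$; $(R\rightarrow)$ from $\alpha_1,\Gamma\Rightarrow\Delta,\alpha_2$ infer $\Gamma\Rightarrow\Delta,\alpha_1\rightarrow\alpha_2$; $(L\rightarrow)$ from $\Gamma\Rightarrow\Delta,\alpha_1$ and $\alpha_2,\Gamma\Rightarrow\Delta$ infer $\alpha_1\rightarrow\alpha_2,\Gamma\Rightarrow\Delta$; $(R\neg)$ from $\alpha,\Gamma\Rightarrow\Delta$ infer $\Gamma\Rightarrow\Delta,\neg\alpha$; $(L\neg)$ from $\Gamma\Rightarrow\Delta,\alpha$ infer $\neg\alpha,\Gamma\Rightarrow\Delta$; $(D_K)$: from $\alpha_1,\dots,\alpha_n\Rightarrow\beta$ ($n\ge0$) infer $\Sigma,D_{G_1}\alpha_1,\dots,D_{G_n}\alpha_n\Rightarrow D_G\beta,\Omega$ where all $G_i\subseteq G$, $\Sigma$ consists only of propositional variables, $\bot$, and $D_H\gamma$ with $H\not\subseteq G$, and $\Omega$ only of propositional variables, $\bot$, outmost-boxed formulas. $\mathsf{G}(\mathbf{KD}_D)$ adds $(D_D)$: from $\Gamma\Rightarrow$ with $\Gamma\neq\emptyset$ infer $\Sigma,D_{\{a\}}\Gamma\Rightarrow\Omega$,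 $\Sigma$ only propositional variables, $\bot$, $D_H\gamma$ with $H\neq\{a\}$; $\Omega$ only propositional variables, $\bot$, outmost-boxed formulas. $\mathsf{G}(\mathbf{KT}_D)$ adds to $\mathsf{G}(\mathbf{K}_D)$ $(D_T)$: from $D_G\alpha,\alpha,\Gamma\Rightarrow\Delta$ infer $D_G\alpha,\Gamma\Rightarrow\Delta$. *)

(* Defs.v *)
From mathcomp Require Import all_boot.
From Stdlib Require Import List Permutation.
Set Implicit Arguments. Unset Strict Implicit. Unset Printing Implicit Defensive.

Section Syntax.
Variable Agt : finType.

Definition grp := {G : {set Agt} | G != set0}.

Inductive form : Type :=
| Var : nat -> form
| Bot : form
| And : form -> form -> form
| Or  : form -> form -> form
| Imp : form -> form -> form
| Neg : form -> form
| Box : grp -> form -> form.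

Definition is_atom_or_bot (a : form) : Prop :=
  match a with Var _ | Bot => True | _ => False end.

Definition omega_ok (a : form) : Prop :=
  match a with Var _ | Bot | Box _ _ => True | _ => False end.

Definition sigmaK_ok (G : grp) (a : form) : Prop :=
  match a with
  | Var _ | Bot => True
  | Box H _ => ~ (val H \subset val G)
  | _ => False
  end.

Definition sigmaD_ok (ag : Agt) (a : form) : Prop :=
  match a with
  | Var _ | Bot => True
  | Box H _ => val H <> [set ag]
  | _ => False
  end.

Inductive logic := LK | LKD | LKT.

(* Sequents are pairs of finite multisets, represented by lists up to permutation. *)
Inductive derivable (L : logic) : list form -> list form -> Prop :=
| ax_var : forall G D Gm Dl p,
    Permutation G (Var p :: Gm) -> Permutation D (Var p :: Dl) -> derivable L G D
| ax_bot : forall G D Gm,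
    Permutation G (Bot :: Gm) -> derivable L G D
| r_and : forall G D Dl a1 a2,
    derivable L G (Dl ++ [:: a1]) -> derivable L G (Dl ++ [:: a2]) ->
    Permutation D (Dl ++ [:: And a1 a2]) -> derivable L G D
| l_and : forall G D Gm a1 a2,
    derivable L (a1 :: a2 :: Gm) D ->
    Permutation G (And a1 a2 :: Gm) -> derivable L G D
| r_or : forall G D Dl a1 a2,
    derivable L G (Dl ++ [:: a1; a2]) ->
    Permutation D (Dl ++ [:: Or a1 a2]) -> derivable L G D
| l_or : forall G D Gm a1 a2,
    derivable L (a1 :: Gm) D -> derivable L (a2 :: Gm) D ->
    Permutation G (Or a1 a2 :: Gm) -> derivable L G D
| r_imp : forall G D Dl a1 a2,
    derivable L (a1 :: G) (Dl ++ [:: a2]) ->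
    Permutation D (Dl ++ [:: Imp a1 a2]) -> derivable L G D
| l_imp : forall G D Gm a1 a2,
    derivable L Gm (D ++ [:: a1]) -> derivable L (a2 :: Gm) D ->
    Permutation G (Imp a1 a2 :: Gm) -> derivable L G D
| r_neg : forall G D Dl a,
    derivable L (a :: G) Dl ->
    Permutation D (Dl ++ [:: Neg a]) -> derivable L G D
| l_neg : forall G D Gm a,
    derivable L Gm (D ++ [:: a]) ->
    Permutation G (Neg a :: Gm) -> derivable L G D
| r_DK : forall G D (Sg Om : list form) (boxes : list (grp * form)) (Gp : grp) b,
    derivable L (map snd boxes) [:: b] ->
    (forall x, In x boxes -> val x.1 \subset val Gp) ->
    (forall s, In s Sg -> sigmaK_ok Gp s) ->
    (forall o, In o Om -> omega_ok o) ->
    Permutation G (Sg ++ map (fun x => Box x.1 x.2) boxes) ->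
    Permutation D (Box Gp b :: Om) ->
    derivable L G D
| r_DD : forall G D (Sg Om Gam : list form) (ag : Agt) (Ga : grp),
    L = LKD ->
    val Ga = [set ag] ->
    Gam <> nil ->
    derivable L Gam nil ->
    (forall s, In s Sg -> sigmaD_ok ag s) ->
    (forall o, In o Om -> omega_ok o) ->
    Permutation G (Sg ++ map (Box Ga) Gam) ->
    Permutation D Om ->
    derivable L G D
| r_DT : forall G D Gm (Gp : grp) a,
    L = LKT ->
    derivable L (Box Gp a :: a :: Gm) D ->
    Permutation G (Box Gp a :: Gm) ->
    derivable L G D.

End Syntax.

(* Main.v *)
Require Import Defs.
From mathcomp Require Import all_boot.
From Stdlib Require Import List Permutation Lia.
Set Bullet Behavior "Strict Subproofs".

Lemma catE (T : Type) (l m : list T) : cat l m = app l m.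
Proof. by elim: l => //= a l ->. Qed.

Fixpoint fsize {A : finType} (f : form A) : nat :=
  match f with
  | Var _ | Bot => 1
  | And a b | Or a b | Imp a b => S (Nat.add (fsize a) (fsize b))
  | Neg a | Box _ a => S (fsize a)
  end.
Fixpoint msize {A : finType} (l : list (form A)) : nat :=
  match l with nil => 0 | a :: l => Nat.add (fsize a) (msize l) end.

Lemma msize_app {A : finType} (l m : list (form A)) : msize (app l m) = Nat.add (msize l) (msize m).
Proof. induction l as [|a l IH]; simpl; [reflexivity| rewrite IH; lia]. Qed.

Lemma msize_perm {A : finType} {l m : list (form A)} : Permutation l m -> msize l = msize m.
Proof. induction 1; simpl; lia. Qed.

Lemma find_compound {A : finType} (X : list (form A)) :
  Forall (@omega_ok A) X \/ exists c X', Permutation X (c :: X') /\ ~ omega_ok c.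
Proof.
  induction X as [|a X IH]; [left; constructor|].
  destruct IH as [H|[c [X' [H1 H2]]]].
  - destruct a as [p| |a1 a2|a1 a2|a1 a2|a1|g a1].
    1,2,7: left; constructor; [exact I|exact H].
    all: right; eexists; exists X; split; [apply Permutation_refl| intros []].
  - right. exists c, (a :: X'). split; [|exact H2].
    rewrite H1. apply perm_swap.
Qed.

Lemma fsize_pos {A : finType} (c : form A) : (1 <= fsize c)%coq_nat.
Proof. destruct c; simpl; lia. Qed.

Definition Pd {A : finType} L (G D : list (form A)) :=
  forall X Y G' D', Permutation (app X G) G' -> Permutation (app D Y) D' -> derivable L G' D'.

Lemma decompose {A : finType} L (G D : list (form A)) :
  (forall X Y, Forall (@omega_ok A) X -> Forall (@omega_ok A) Y ->
     forall G' D', Permutation (app X G) G' -> Permutation (app D Y) D' -> derivable L G' D') ->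
  Pd L G D.
Proof.
  intros Hb.
  assert (K : forall n X Y, (Nat.add (msize X) (msize Y) <= n)%coq_nat -> forall G' D',
     Permutation (app X G) G' -> Permutation (app D Y) D' -> derivable L G' D').
  2:{ intros X Y; exact (K _ X Y (le_n _)). }
  induction n as [|n IHn]; intros X Y Hn G' D' HG HD;
  (destruct (find_compound X) as [FX|[c [X' [HX Hc]]]];
  [destruct (find_compound Y) as [FY|[c [Y' [HY Hc]]]];
    [now apply (Hb X Y)|] |]).
  - exfalso. pose proof (msize_perm HY). simpl in *. pose proof (fsize_pos c). lia.
  - exfalso. pose proof (msize_perm HX). simpl in *. pose proof (fsize_pos c). lia.
  - pose proof (msize_perm HY) as Hm. simpl in Hm.
    assert (HD2 : Permutation D' (app (app D Y') [:: c])).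
    { rewrite -HD HY -app_assoc. apply: Permutation_app_head; apply: Permutation_cons_append. }
    destruct c as [p| |a1 a2|a1 a2|a1 a2|a1|g a1]; try (exfalso; apply Hc; exact I); simpl in Hm.
    + eapply r_and.
      * apply (IHn X (app Y' [:: a1])); [rewrite msize_app; simpl; lia|exact HG|].
        rewrite !catE app_assoc. reflexivity.
      * apply (IHn X (app Y' [:: a2])); [rewrite msize_app; simpl; lia|exact HG|].
        rewrite !catE app_assoc. reflexivity.
      * rewrite !catE. exact HD2.
    + eapply r_or.
      * apply (IHn X (app Y' [:: a1; a2])); [rewrite msize_app; simpl; lia|exact HG|].
        rewrite !catE app_assoc. reflexivity.
      * rewrite !catE. exact HD2.
    + eapply r_imp.
      * apply (IHn (a1 :: X) (app Y' [:: a2])); [rewrite msize_app; simpl; lia| |].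
        -- simpl. apply: perm_skip; exact HG.
        -- rewrite !catE app_assoc. reflexivity.
      * rewrite !catE. exact HD2.
    + eapply r_neg.
      * apply (IHn (a1 :: X) Y'); [simpl; lia| |reflexivity].
        simpl. apply: perm_skip; exact HG.
      * rewrite !catE. exact HD2.
  - pose proof (msize_perm HX) as Hm. simpl in Hm.
    assert (HG2 : forall c', Permutation (c :: app X' G) c' -> Permutation G' c').
    { intros c' Hc'. rewrite -Hc' -HG HX. reflexivity. }
    destruct c as [p| |a1 a2|a1 a2|a1 a2|a1|g a1]; try (exfalso; apply Hc; exact I); simpl in Hm.
    + eapply l_and; [|apply: HG2; reflexivity].
      apply (IHn (a1 :: a2 :: X') Y); [simpl; lia|reflexivity|exact HD].
    + eapply l_or; [| |apply: HG2; reflexivity].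
      * apply (IHn (a1 :: X') Y); [simpl; lia|reflexivity|exact HD].
      * apply (IHn (a2 :: X') Y); [simpl; lia|reflexivity|exact HD].
    + eapply l_imp; [| |apply: HG2; reflexivity].
      * apply (IHn X' (app Y [:: a1])); [rewrite msize_app; simpl; lia|reflexivity|].
        rewrite !catE app_assoc HD. reflexivity.
      * apply (IHn (a2 :: X') Y); [simpl; lia|reflexivity|exact HD].
    + eapply l_neg; [|apply: HG2; reflexivity].
      apply (IHn X' (app Y [:: a1])); [rewrite msize_app; simpl; lia|reflexivity|].
      rewrite !catE app_assoc HD. reflexivity.
Qed.

Lemma PLm {A : finType} (m : list (form A)) {X G Gm G' : list (form A)} :
  Permutation G (app m Gm) -> Permutation (app X G) G' -> Permutation G' (app m (app X Gm)).
Proof. intros H1 H2. rewrite -H2 H1. apply Permutation_app_swap_app. Qed.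

Lemma PR {A : finType} {m D Dl Y D' : list (form A)} :
  Permutation D (app Dl m) -> Permutation (app D Y) D' -> Permutation D' (app (app Dl Y) m).
Proof. intros H1 H2. rewrite -H2 H1 -!app_assoc. apply: Permutation_app_head. apply Permutation_app_comm. Qed.

Lemma PA {A : finType} (l m Y : list (form A)) :
  Permutation (app (app l m) Y) (app (app l Y) m).
Proof. rewrite -!app_assoc. apply: Permutation_app_head. apply Permutation_app_comm. Qed.

Lemma splitK {A : finType} (Gp : grp A) {X : list (form A)} : Forall (@omega_ok A) X ->
  exists Sx bx, Permutation X (app Sx (List.map (fun x => Box x.1 x.2) bx)) /\
    (forall s, In s Sx -> sigmaK_ok Gp s) /\ (forall x, In x bx -> val x.1 \subset val Gp).
Proof.
  induction 1 as [|a X Ha FX [Sx [bx [H1 [H2 H3]]]]].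
  - exists nil, nil. split; [reflexivity|split; intros ? []].
  - destruct a as [p| |a1 a2|a1 a2|a1 a2|a1|g a1]; try (destruct Ha).
    + exists (Var _ p :: Sx), bx. split; [simpl; apply perm_skip; exact H1|split; [|exact H3]].
      intros s [<-|Hs]; [exact I|auto].
    + exists (Bot _ :: Sx), bx. split; [simpl; apply perm_skip; exact H1|split; [|exact H3]].
      intros s [<-|Hs]; [exact I|auto].
    + case Hsub: (val g \subset val Gp).
      * exists Sx, ((g, a1) :: bx). split; [|split; [exact H2|]].
        -- rewrite H1 /=. apply Permutation_middle.
        -- intros x [<-|Hx]; [exact Hsub|auto].
      * exists (Box g a1 :: Sx), bx. split; [simpl; apply perm_skip; exact H1|split; [|exact H3]].
        intros s [<-|Hs]; [simpl; rewrite Hsub; discriminate|auto].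
Qed.

Lemma splitD {A : finType} {ag : A} {Ga : grp A} {X : list (form A)} :
  val Ga = [set ag] -> Forall (@omega_ok A) X ->
  exists Sx gx, Permutation X (app Sx (List.map (Box Ga) gx)) /\
    (forall s, In s Sx -> sigmaD_ok ag s).
Proof.
  intros HGa. induction 1 as [|a X Ha FX [Sx [gx [H1 H2]]]].
  - exists nil, nil. split; [reflexivity|intros ? []].
  - destruct a as [p| |a1 a2|a1 a2|a1 a2|a1|g a1]; try (destruct Ha).
    + exists (Var _ p :: Sx), gx. split; [simpl; apply perm_skip; exact H1|].
      intros s [<-|Hs]; [exact I|auto].
    + exists (Bot _ :: Sx), gx. split; [simpl; apply perm_skip; exact H1|].
      intros s [<-|Hs]; [exact I|auto].
    + case Hsub: (val g == [set ag]).
      * move/eqP: Hsub => Hsub.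
        have Eg : g = Ga by apply: val_inj; rewrite Hsub HGa.
        subst g. exists Sx, (a1 :: gx). split; [|exact H2].
        rewrite H1 /=. apply Permutation_middle.
      * exists (Box g a1 :: Sx), gx. split; [simpl; apply perm_skip; exact H1|].
        intros s [<-|Hs]; [|auto]. simpl. move=> E. move: Hsub. rewrite -[val g]/(sval g) E eqxx. discriminate.
Qed.

Lemma main_weak {A : finType} L (G D : list (form A)) : derivable L G D -> Pd L G D.
Proof.
  induction 1 as
    [G D Gm Dl p H1 H2 | G D Gm H1
    | G D Dl a1 a2 d1 IH1 d2 IH2 H | G D Gm a1 a2 d IH H
    | G D Dl a1 a2 d IH H | G D Gm a1 a2 d1 IH1 d2 IH2 H
    | G D Dl a1 a2 d IH H | G D Gm a1 a2 d1 IH1 d2 IH2 H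
    | G D Dl a d IH H | G D Gm a d IH H
    | G D Sg Om boxes Gp b d IH Hb HS HO H1 H2
    | G D Sg Om Gam ag Ga HL HGa Hne d IH HS HO H1 H2
    | G D Gm Gp a HL d IH H].
  - intros X Y G' D' HG HD. apply (@ax_var _ _ G' D' (app X Gm) (app Dl Y) p).
    + exact (PLm [:: Var _ p] H1 HG).
    + rewrite -HD H2. reflexivity.
  - intros X Y G' D' HG HD. apply (@ax_bot _ _ G' D' (app X Gm)).
    exact (PLm [:: Bot _] H1 HG).
  - intros X Y G' D' HG HD. rewrite catE in H. apply (@r_and _ _ G' D' (app Dl Y) a1 a2).
    + apply (IH1 X Y G' _ HG). rewrite !catE. apply PA.
    + apply (IH2 X Y G' _ HG). rewrite !catE. apply PA.
    + rewrite catE. exact (PR H HD).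
  - intros X Y G' D' HG HD. apply (@l_and _ _ G' D' (app X Gm) a1 a2).
    + exact (IH X Y _ D' (Permutation_app_swap_app X [:: a1; a2] Gm) HD).
    + exact (PLm [:: And a1 a2] H HG).
  - intros X Y G' D' HG HD. rewrite catE in H. apply (@r_or _ _ G' D' (app Dl Y) a1 a2).
    + apply (IH X Y G' _ HG). rewrite !catE. apply PA.
    + rewrite catE. exact (PR H HD).
  - intros X Y G' D' HG HD. apply (@l_or _ _ G' D' (app X Gm) a1 a2).
    + exact (IH1 X Y _ D' (Permutation_app_swap_app X [:: a1] Gm) HD).
    + exact (IH2 X Y _ D' (Permutation_app_swap_app X [:: a2] Gm) HD).
    + exact (PLm [:: Or a1 a2] H HG).
  - intros X Y G' D' HG HD. rewrite catE in H. apply (@r_imp _ _ G' D' (app Dl Y) a1 a2).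
    + apply (IH X Y (a1 :: G')).
      * rewrite -HG. symmetry. apply Permutation_middle.
      * rewrite !catE. apply PA.
    + rewrite catE. exact (PR H HD).
  - intros X Y G' D' HG HD. apply (@l_imp _ _ G' D' (app X Gm) a1 a2).
    + eapply (IH1 X Y _ _ (Permutation_refl _)). rewrite !catE -HD. apply PA.
    + exact (IH2 X Y _ D' (Permutation_app_swap_app X [:: a2] Gm) HD).
    + exact (PLm [:: Imp a1 a2] H HG).
  - intros X Y G' D' HG HD. rewrite catE in H. apply (@r_neg _ _ G' D' (app Dl Y) a).
    + apply (IH X Y (a :: G')); [|reflexivity].
      rewrite -HG. symmetry. apply Permutation_middle.
    + rewrite catE. exact (PR H HD).
  - intros X Y G' D' HG HD. apply (@l_neg _ _ G' D' (app X Gm) a).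
    + eapply (IH X Y _ _ (Permutation_refl _)). rewrite !catE -HD. apply PA.
    + exact (PLm [:: Neg a] H HG).
  - apply decompose. intros X Y FX FY G' D' HG HD.
    destruct (splitK Gp FX) as [Sx [bx [E1 [E2 E3]]]].
    apply (@r_DK _ _ G' D' (app Sx Sg) (app Om Y) (app bx boxes) Gp b).
    + apply (IH (List.map snd bx) nil); [|reflexivity].
      rewrite ?catE map_app. reflexivity.
    + intros x Hx. destruct (in_app_or _ _ _ Hx); auto.
    + intros x Hx. destruct (in_app_or _ _ _ Hx); auto.
    + intros x Hx. destruct (in_app_or _ _ _ Hx); auto.
      rewrite Forall_forall in FY. auto.
    + rewrite -HG E1 ?catE map_app -!app_assoc. apply: Permutation_app_head.
      rewrite H1. apply Permutation_app_swap_app.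
    + rewrite -HD H2 ?catE. reflexivity.
  - apply decompose. intros X Y FX FY G' D' HG HD.
    destruct (splitD HGa FX) as [Sx [gx [E1 E2]]].
    apply (@r_DD _ _ G' D' (app Sx Sg) (app Om Y) (app gx Gam) ag Ga HL HGa).
    + destruct gx; simpl; [exact Hne|discriminate].
    + apply (IH gx nil); [|reflexivity]. rewrite ?catE. reflexivity.
    + intros x Hx. destruct (in_app_or _ _ _ Hx); auto.
    + intros x Hx. destruct (in_app_or _ _ _ Hx); auto.
      rewrite Forall_forall in FY. auto.
    + rewrite -HG E1 ?catE map_app -!app_assoc. apply: Permutation_app_head.
      rewrite H1. apply Permutation_app_swap_app.
    + rewrite -HD H2 ?catE. reflexivity.
  - intros X Y G' D' HG HD. apply (@r_DT _ _ G' D' (app X Gm) Gp a HL).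
    + exact (IH X Y _ D' (Permutation_app_swap_app X [:: Box Gp a; a] Gm) HD).
    + exact (PLm [:: Box Gp a] H HG).
Qed.

Theorem proposition3p8 (Agt : finType) (L : logic)
    (Gam Del : list (form Agt)) (lam : form Agt) :
  0 < #|Agt| ->
  derivable L Gam Del ->
  derivable L Gam (Del ++ [:: lam]) /\ derivable L (lam :: Gam) Del.
Proof.
  intros _ Hd. pose proof (main_weak _ _ _ Hd) as P. split.
  - apply (P nil [:: lam]); reflexivity.
  - apply (P [:: lam] nil); [reflexivity|]. rewrite app_nil_r. reflexivity.
Qed.
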